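(* Let $f\colon G\to G$ be a graph map with mapping torus $X$, and let $H$, $z$, $\widetilde P$ be as in the context. Let $\mathcal V_1,\dots,\mathcal V_m$ be the connected components of the union $\mathcal V$ of the vertical edges of $X$, and let $c_i\in H$ be the homology class of the unique embedded directed cycle in $\mathcal V_i$. Then $\det(I-z^{-1}\widetilde P)\doteq\prod_{i=1}^m(1-c_i)$.
   Context: $G$ is a finite connected graph; a graph map sends vertices to vertices and edges to nondegenerate edge paths. $X=G\times[0,1]/(x,1)\sim(f(x),0)$ is the mapping torus; its vertical edges are the arcs $\{v\}\times[0,1]$ for vertices $v$ of $G$, oriented from $v$ to $f(v)$; each component of their union consists of one directed cycle (a periodic orbit of $f$ on vertices) with trees attached. $H=H_1(X;\mathbb{Z})/\mathrm{torsion}$, $\widetilde X\to X$ is the universal free abelian cover with deck group $H$, $\widetilde G_0$ is a fixed component of the preimage of $G$ with stabilizer $K$, $\widetilde f\colon\widetilde G_0\to\widetilde G_0$ is a fixed lift of $f$, and $z\in H$ is the deck transformation such that for each $\widetilde x\in\widetilde G_0$ over $x$, $\widetilde f(\widetilde x)$ is the first point of $\widetilde G_0$ on the lift starting at $z\widetilde x$ of the arc $\{x\}\times[0,1]$. With a chosen lift of each vertex, $C_0(\widetilde G_0)\cong\mathbb{Z}[K]^V$ and $\widetilde P$ is the $\mathbb{Z}[K]$-matrix of $\widetilde f$ on $0$-chains. $\doteq$ means equality in $\mathbb{Z}[H]$ up to a unit $\pm h$, $h\in H$. *)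

(* Defs.v *)
From HB Require Import structures.
From mathcomp Require Import all_boot all_algebra finmap.
From mathcomp Require Import monalg.
Set Implicit Arguments. Unset Strict Implicit. Unset Printing Implicit Defensive.
Import GRing.Theory.
Local Open Scope fset.
Local Open Scope ring_scope.

Definition grpalg (K : zmodType) : predArgType := malg K int.
HB.instance Definition _ (K : zmodType) := GRing.Zmodule.on (grpalg K).

Section GrpAlg.
Context (K : zmodType).
Local Notation R := (grpalg K).
Implicit Types (g : R) (k : K).

Definition gone : R := << (0 : K) >>.
Definition gmul g1 g2 : R :=
  \sum_(k1 <- msupp g1) \sum_(k2 <- msupp g2) << g1@_k1 * g2@_k2 *g (k1 + k2) >>.

Lemma gmullw (d1 d2 : {fset K}) g1 g2 :
  msupp g1 `<=` d1 -> msupp g2 `<=` d2 ->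
  gmul g1 g2 = \sum_(k1 <- d1) \sum_(k2 <- d2) << g1@_k1 * g2@_k2 *g (k1 + k2) >>.
Proof.
move=> le_d1 le_d2; rewrite /gmul (big_fset_incl _ le_d1) /=.
  apply/eq_bigr=> k1 _; apply/big_fset_incl => // k _ /mcoeff_outdom ->.
  by rewrite mulr0 monalgU0.
move=> k _ /mcoeff_outdom g1k.
by rewrite big1 => // k' _; rewrite g1k mul0r monalgU0.
Qed.

Lemma gmul0g : left_zero 0 gmul.
Proof. by move=> g; rewrite /gmul msupp0 big_seq_fset0. Qed.
Lemma gmulg0 : right_zero 0 gmul.
Proof. by move=> g; rewrite /gmul exchange_big msupp0 big_seq_fset0. Qed.

Lemma gmulUg c k g :
  gmul << c *g k >> g = \sum_(k' <- msupp g) << c * g@_k' *g (k + k') >>.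
Proof.
rewrite (gmullw msuppU_le (fsubset_refl _)) big_seq_fset1.
by apply/eq_bigr => k' _; rewrite mcoeffUU.
Qed.

Lemma gmulgU c k g :
  gmul g << c *g k >> = \sum_(k' <- msupp g) << g@_k' * c *g (k' + k) >>.
Proof.
rewrite (gmullw (fsubset_refl _) msuppU_le).
by apply/eq_bigr=> k' _; rewrite big_seq_fset1 mcoeffUU.
Qed.

Lemma gmulUU c1 c2 k1 k2 :
  gmul << c1 *g k1 >> << c2 *g k2 >> = << c1 * c2 *g (k1 + k2) >>.
Proof. by rewrite (gmullw msuppU_le msuppU_le) !big_seq_fset1 !mcoeffUU. Qed.

Lemma gmulEl1 g1 g2 :
  gmul g1 g2 = \sum_(k1 <- msupp g1) gmul << g1@_k1 *g k1 >> g2.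
Proof. by apply/eq_bigr=> k _; rewrite gmulUg. Qed.

Lemma gmulEr1 g1 g2 :
  gmul g1 g2 = \sum_(k2 <- msupp g2) gmul g1 << g2@_k2 *g k2 >>.
Proof.
by rewrite {1}/gmul exchange_big /=; apply/eq_bigr=> k _; rewrite gmulgU.
Qed.

Lemma gmul1g : left_id gone gmul.
Proof.
move=> g; rewrite gmulUg [RHS]monalgE.
by apply/eq_bigr=> kg _; rewrite mul1r add0r.
Qed.

Lemma gmulg1 : right_id gone gmul.
Proof.
move=> g; rewrite gmulgU [RHS]monalgE.
by apply/eq_bigr=> k _; rewrite mulr1 addr0.
Qed.

Lemma gmulgDl : left_distributive gmul +%R.
Proof.
move=> g1 g2 g.
rewrite [in RHS](gmullw (fsubsetUl _ (msupp g2)) (fsubset_refl (msupp g))).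
rewrite [in RHS](gmullw (fsubsetUr (msupp g1) _) (fsubset_refl (msupp g))).
rewrite (gmullw (msuppD_le _ _) (fsubset_refl _)).
rewrite -big_split /=; apply/eq_bigr=> k1 _.
rewrite -big_split /=; apply/eq_bigr=> k2 _.
by rewrite mcoeffD mulrDl monalgUD.
Qed.

Lemma gmulgDr : right_distributive gmul +%R.
Proof.
move=> g g1 g2.
rewrite [in RHS](gmullw (fsubset_refl (msupp g)) (fsubsetUl _ (msupp g2))).
rewrite [in RHS](gmullw (fsubset_refl (msupp g)) (fsubsetUr (msupp g1) _)).
rewrite (gmullw (fsubset_refl _) (msuppD_le _ _)).
rewrite -big_split /=; apply/eq_bigr => k1 _.
rewrite -big_split /=; apply/eq_bigr => k2 _.
by rewrite mcoeffD mulrDr monalgUD.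
Qed.

Lemma gmulA : associative gmul.
Proof.
move=> g1 g2 g3.
rewrite [RHS](big_morph (gmul^~ _) (fun _ _ => gmulgDl _ _ _) (gmul0g _)).
rewrite gmulEl1; apply/eq_bigr=> k1 _.
rewrite [LHS](big_morph (gmul _) (fun _ _ => gmulgDr _ _ _) (gmulg0 _)).
rewrite [RHS](big_morph (gmul^~ _) (fun _ _ => gmulgDl _ _ _) (gmul0g _)).
apply/eq_bigr=> k2 _.
rewrite [LHS](big_morph (gmul _) (fun _ _ => gmulgDr _ _ _) (gmulg0 _)).
by rewrite gmulEr1; apply/eq_bigr=> k3 _; rewrite !gmulUU mulrA addrA.
Qed.

Lemma gone_neq0 : gone != 0.
Proof. by rewrite monalgU_eq0 oner_eq0. Qed.

Lemma gmulC : commutative gmul.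
Proof.
move=> g1 g2; rewrite /gmul exchange_big /=; apply/eq_bigr=> k1 _.
by apply/eq_bigr=> k2 _; rewrite mulrC addrC.
Qed.

HB.instance Definition _ := GRing.Zmodule_isComNzRing.Build R
  gmulA gmulC gmul1g gmulgDl gone_neq0.
End GrpAlg.


Section MappingTorus.
Variables (V E : finType) (src tgt : E -> V).

Definition oedge := (E * bool)%type.
Definition osrc (x : oedge) : V := if x.2 then src x.1 else tgt x.1.
Definition otgt (x : oedge) : V := if x.2 then tgt x.1 else src x.1.

Fixpoint gpath (u : V) (p : seq oedge) (w : V) : bool :=
  match p with
  | [::] => u == w
  | x :: q => (osrc x == u) && gpath (otgt x) q w
  end.

Definition graph_connected : Prop := forall u w : V, exists p, gpath u p w.

Variables (fV : V -> V) (fE : E -> seq oedge).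

Definition is_graph_map : Prop :=
  forall e : E, fE e != [::] /\ gpath (fV (src e)) (fE e) (fV (tgt e)).

(* 1-cells of X: the edges of G (inl e) and the vertical edges (inr v),   *)
(* the vertical edge of v going from v to fV v.                            *)
Definition cell1 := (E + V)%type.
Definition c1src (s : cell1) : V := match s with inl e => src e | inr v => v end.
Definition c1tgt (s : cell1) : V := match s with inl e => tgt e | inr v => fV v end.

Definition chain := {ffun cell1 -> int}.
Definition delta (s : cell1) : chain := [ffun s' => (s' == s)%:Z].
Definition pchain (p : seq oedge) : chain :=
  \sum_(x <- p) (if x.2 then delta (inl x.1) else - delta (inl x.1)).
Definition bd1 (c : chain) (v : V) : int :=
  \sum_(s : cell1) c s * ((c1tgt s == v)%:Z - (c1src s == v)%:Z).
Definition is_cycle (c : chain) : Prop := forall v, bd1 c v = 0.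

(* boundary of the 2-cell e x [0,1] of X: e, vert(tgt e), f(e)^-1, vert(src e)^-1 *)
Definition bd2 (e : E) : chain :=
  delta (inl e) + delta (inr (tgt e)) - pchain (fE e) - delta (inr (src e)).

Definition ncell1 := #|{: cell1}|.
Definition chainQ (c : chain) : 'rV[rat]_ncell1 := \row_i ((c (enum_val i))%:~R).
Definition B2 : 'M[rat]_(#|{: E}|, ncell1) := \matrix_(i, j) ((bd2 (enum_val i) (enum_val j))%:~R).

(* H = H_1(X;Z)/torsion, realized injectively inside the Q-vector space    *)
(* 'rV[rat]_ncell1: the class of an integral cycle c is c *m cokermx B2,   *)
(* whose kernel on cycles is exactly {c | c in the Q-span of boundaries},   *)
(* i.e. the torsion-saturation of B_1.                                      *)
Definition Hamb := 'rV[rat]_ncell1.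
Definition hcls (c : chain) : Hamb := chainQ c *m cokermx B2.
Definition inH (h : Hamb) : Prop := exists c : chain, is_cycle c /\ hcls c = h.

(* Z[H] (inside the group ring Z[Hamb]); mon h is the group element h *)
Definition ZH := grpalg Hamb.
Definition mon (h : Hamb) : ZH := << h >>.

(* f =. g  : equality in Z[H] up to a unit +-h, h in H *)
Definition doteq (x y : ZH) : Prop :=
  exists (s : bool) (h : Hamb), inH h /\ x = (-1) ^+ s * mon h * y.

(* Model of the universal free abelian cover X~: its vertices are the     *)
(* pairs (v, h), h in H, the deck transformation k in H acts by           *)
(* (v, h) |-> (v, h + k), and the lift of the 1-cell s starting at (c1src s, h)*)
(* ends at (c1tgt s, h + theta s), where theta : cell1 -> H is any         *)
(* assignment whose linear extension to integral cycles is the class map. *)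
Variable theta : cell1 -> Hamb.
Definition cover_cocycle : Prop :=
  (forall s, inH (theta s)) /\
  (forall c : chain, is_cycle c -> \sum_(s : cell1) theta s *~ c s = hcls c).

(* displacement of the lift of an edge path of G *)
Definition thsum (p : seq oedge) : Hamb :=
  \sum_(x <- p) (if x.2 then theta (inl x.1) else - theta (inl x.1)).

(* (v,h) and (w,h') lie in the same component of the preimage of G in X~ *)
Definition Gconn (v : V) (h : Hamb) (w : V) (h' : Hamb) : Prop :=
  exists p, gpath v p w /\ h' = h + thsum p.

(* chosen lifts v~ = (v, a v), all in one component G~_0 of the preimage of G *)
Variable a : V -> Hamb.
Definition lifts_ok : Prop :=
  (forall v, inH (a v)) /\ (forall v w, Gconn v (a v) w (a w)).
Definition inG0 (w : V) (h : Hamb) : Prop := exists v, Gconn v (a v) w h.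

(* f~ : G~_0 -> G~_0 lifting f, on vertices: f~(v,h) = (fV v, ftilde v h); *)
(* compatibility along edges (the lift of e from (src e,h) is mapped to the *)
(* lift of the path fE e starting at f~(src e, h)).                          *)
Variable ftilde : V -> Hamb -> Hamb.
Definition lift_ok : Prop :=
  (forall v h, inG0 v h -> inG0 (fV v) (ftilde v h)) /\
  (forall e h, inG0 (src e) h ->
     ftilde (tgt e) (h + theta (inl e)) = ftilde (src e) h + thsum (fE e)).

(* z : f~(x~) is the endpoint of the lift, starting at z x~, of the vertical arc *)
Variable z : Hamb.
Definition z_ok : Prop :=
  inH z /\ forall v h, inG0 v h -> ftilde v h = h + z + theta (inr v).

(* P~ : matrix of f~ on 0-chains in the basis of chosen lifts;              *)
(* f~(v~) = k . (fV v)~ with k = ftilde v (a v) - a (fV v) in K.            *)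
Definition Pt : 'M[ZH]_#|{: V}| :=
  \matrix_(i, j) (if enum_val j == fV (enum_val i)
                  then mon (ftilde (enum_val i) (a (enum_val i)) - a (enum_val j))
                  else 0).

(* components of the union of the vertical edges and their cycles *)
Definition vrel : rel V := fun x y => (fV x == y) || (fV y == x).
Definition vcomps : {set {set V}} := [set [set w | connect vrel v w] | v : V].
Definition periodic (v : V) : bool := fconnect fV (fV v) v.
(* the 1-chain of the embedded directed cycle of the component C *)
Definition cyc_chain (C : {set V}) : chain :=
  \sum_(v in C | periodic v) delta (inr v).

End MappingTorus.

(* Main.v *)
Require Import Defs.
From HB Require Import structures.
From mathcomp Require Import all_boot all_algebra finmap.
From mathcomp Require Import monalg.
Import GRing.Theory.
Set Implicit Arguments. Unset Strict Implicit. Unset Printing Implicit Defensive.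
Local Open Scope ring_scope.
Section Iter.
Variables (T : finType) (f : T -> T).

Lemma iterfC n x : iter n f (f x) = f (iter n f x).
Proof. by elim: n => //= n ->. Qed.

Lemma perE x : periodic f x <-> exists n, iter n.+1 f x = x.
Proof.
split=> [/iter_findex H|[n Hn]]; first by exists (findex f (f x) x); rewrite iterSr.
by rewrite /periodic -{2}Hn iterSr; apply: fconnect_iter.
Qed.

Lemma reachE x y : fconnect f x y <-> exists n, iter n f x = y.
Proof.
split=> [/iter_findex H|[n <-]]; first by exists (findex f x y).
exact: fconnect_iter.
Qed.

Lemma iter_period n x k : iter n.+1 f x = x -> iter (n.+1 * k) f x = x.
Proof.
move=> H; elim: k => [|k IH]; first by rewrite muln0.
by rewrite mulnS iterD IH H.
Qed.

Lemma per_f x : periodic f x -> periodic f (f x).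
Proof. by case/perE=> n H; apply/perE; exists n; rewrite iterfC H. Qed.

Lemma per_iter n x : periodic f x -> periodic f (iter n f x).
Proof. by move=> H; elim: n => //= n IH; apply: per_f. Qed.

Lemma per_inj x y : periodic f x -> periodic f y -> f x = f y -> x = y.
Proof.
case/perE=> m Hm; case/perE=> n Hn Hxy.
have Hc : iter m.+1 f (f x) = f x by rewrite iterfC Hm.
have Hc' : iter n.+1 f (f x) = f x by rewrite Hxy iterfC Hn.
have ex : iter m f (f x) = x by rewrite iterfC -iterS Hm.
have ey : iter n f (f x) = y by rewrite Hxy iterfC -iterS Hn.
by rewrite -ey -{1}Hc -iterD addnS -addSn addnC iterD Hc' ex.
Qed.

Lemma per_pred v : periodic f v ->
  exists p, [/\ periodic f p, f p = v & exists n, iter n f v = p].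
Proof.
move=> Hv; case/perE: (Hv) => n Hn; exists (iter n f v); split.
- exact: per_iter.
- by rewrite -iterS.
- by exists n.
Qed.

Lemma exists_per x : exists n, periodic f (iter n f x).
Proof.
have := looping_order f x; case/trajectP=> i lt_i Hi.
exists i; apply/perE; exists (order f x - i).-1.
rewrite prednK ?subn_gt0 // -iterD subnK ?Hi //.
exact: ltnW.
Qed.

Lemma per_reach x y : periodic f x -> periodic f y ->
  (exists m n, iter m f x = iter n f y) -> exists k, iter k f x = y.
Proof.
move=> _ /perE[p Hp] [m [n Hmn]].
exists (p.+1 * n.+1 - n + m)%N.
rewrite iterD Hmn -iterD subnK; first exact: iter_period.
by rewrite mulSn (leq_trans (leqnSn n)) // leq_addr.
Qed.

End Iter.
Section Mat.
Variable R : comNzRingType.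

Lemma det_coladd n (A : 'M[R]_n) j1 j2 c : j1 != j2 ->
  \det (\matrix_(i, j) (A i j + (if j == j2 then c * A i j1 else 0))) = \det A.
Proof.
move=> nj; rewrite -det_tr -[RHS]det_tr.
set X := (X in \det X = _).
have hl i : (lift j2 i == j2) = false by apply/negbTE; rewrite eq_sym neq_lift.
pose C : 'M[R]_n := \matrix_(i, j) (if i == j2 then A^T j1 j else A^T i j).
rewrite (determinant_multilinear (A:=X) (B:=A^T) (C:=C) (i0:=j2) (b:=1) (c:=c)).
- rewrite (determinant_alternate (A:=C) (i1:=j1) (i2:=j2)) // ?mulr0 ?addr0 ?mul1r //.
  by move=> k; rewrite !mxE eqxx (negbTE nj).
- apply/rowP=> k; rewrite !mxE eqxx mul1r.
  done.
- by apply/matrixP=> i k; rewrite /X !mxE hl addr0.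
- by apply/matrixP=> i k; rewrite /C /X !mxE hl addr0.
Qed.

Lemma det_rowunit n (X Y : 'M[R]_n) i0 :
  (forall j, X i0 j = (j == i0)%:R) -> (forall j, Y i0 j = (j == i0)%:R) ->
  (forall i j, i != i0 -> j != i0 -> X i j = Y i j) -> \det X = \det Y.
Proof.
move=> HX HY HXY.
rewrite (expand_det_row X i0) (expand_det_row Y i0).
rewrite (bigD1 i0) //= [in RHS](bigD1 i0) //= !big1 ?addr0.
- rewrite HX HY eqxx !mul1r /cofactor; congr (_ * \det _).
  by apply/matrixP=> i j; rewrite !mxE HXY // eq_sym neq_lift.
- by move=> j nj; rewrite HY (negbTE nj) mul0r.
- by move=> j nj; rewrite HX (negbTE nj) mul0r.
Qed.

Variable T : finType.
Definition Mf (f : T -> T) (w : T -> R) : 'M[R]_#|{: T}| :=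
  \matrix_(i, j) (if enum_val j == f (enum_val i) then w (enum_val i) else 0).
Definition fstep (f : T -> T) v i := if f i == v then f v else f i.
Definition wstep (f : T -> T) (w : T -> R) v i :=
  if i == v then 0 else if f i == v then w i * w v else w i.

Lemma ev_eq (j : 'I_#|{: T}|) x : (j == enum_rank x) = (enum_val j == x).
Proof. by apply/eqP/eqP => [->|<-]; rewrite ?enum_rankK ?enum_valK. Qed.

Lemma det_step f w v : f v != v ->
  \det (1%:M - Mf f w) = \det (1%:M - Mf (fstep f v) (wstep f w v)).
Proof.
move=> nfv.
have nuv : enum_rank v != enum_rank (f v).
  by rewrite ev_eq enum_rankK eq_sym.
rewrite -(det_coladd (1%:M - Mf f w) (w v) nuv).
apply: (det_rowunit (i0 := enum_rank v)).
- move=> j; rewrite !mxE !ev_eq !enum_rankK eqxx.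
  rewrite [enum_rank v == _]eq_sym ev_eq [v == f v]eq_sym (negbTE nfv).
  case: eqP => [->|_]; first by rewrite eq_sym (negbTE nfv) subr0 addr0.
  by case: eqP => _; rewrite ?subr0 ?addr0 // mulr1 subrK.
- move=> j; rewrite !mxE /wstep !ev_eq enum_rankK eqxx if_same subr0.
  by rewrite eq_sym ev_eq.
- move=> i j; rewrite !ev_eq => ni nj; rewrite !mxE !ev_eq enum_rankK.
  rewrite -(inj_eq enum_val_inj).
  rewrite /fstep /wstep (negbTE ni).
  set x := enum_val i; set y := enum_val j.
  rewrite [v == f x]eq_sym.
  case: (eqVneq (f x) v) => [fxv|fxv].
    rewrite fxv (negbTE nj) subr0 mulr0n sub0r.
    by case: ifP => _; rewrite ?addr0 ?subr0 // mulrN mulrC.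
  by rewrite mulr0n subr0 mulr0 if_same addr0.
Qed.
End Mat.
Section Step.
Variables (T : finType) (f : T -> T) (v : T).
Hypothesis nfv : f v != v.
Let f' := fstep f v.
Let g x := if x == v then f v else x.

Lemma fstepE x : f' x = g (f x).
Proof. by rewrite /f' /fstep /g. Qed.

Lemma fstep_nv x : f' x != v.
Proof. by rewrite fstepE /g; case: ifP => // /negbT. Qed.

Lemma fstep_iter n x : exists n', iter n' f' (g x) = g (iter n f x).
Proof.
elim: n => [|n [n' IH]]; first by exists 0%N.
case: (eqVneq (iter n f x) v) => [Ev|Nv].
  exists n'; rewrite IH iterS Ev /g eqxx (negbTE nfv); by [].
by exists n'.+1; rewrite iterS IH fstepE /g (negbTE Nv).
Qed.

Lemma fstep_iter2 n' x : exists n, (n' <= n)%N /\ iter n' f' x = iter n f x.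
Proof.
elim: n' => [|n' [n [le IH]]]; first by exists 0%N.
rewrite iterS IH fstepE /g; case: eqP => [E|_].
  by exists n.+2; split; [exact: leqW le| rewrite !iterS -E].
by exists n.+1; split; [exact: le| rewrite iterS].
Qed.

Lemma per_step x : periodic f' x = periodic f x && (x != v).
Proof.
apply/idP/andP.
  case/perE=> p Hp; split.
    have [n [le E]] := fstep_iter2 p.+1 x.
    apply/perE; exists n.-1; rewrite prednK; first by rewrite -E.
    exact: leq_trans le.
  apply/eqP=> xv; move: Hp; rewrite iterS xv => /eqP; apply/negP.
  exact: fstep_nv.
case=> /perE[p Hp] nxv; apply/perE.
have [n' E] := fstep_iter p (f x).
by exists n'; rewrite iterSr fstepE E -iterSr Hp /g (negbTE nxv).
Qed.

End Step.

Section Main.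
Variables (R : comNzRingType) (T : finType).
Implicit Types (f : T -> T) (w : T -> R) (P : {set {set T}}).

Definition closedP f P := forall B x, B \in P -> x \in B -> f x \in B.
Definition unicyc f P := forall B x y, B \in P -> x \in B -> y \in B ->
  periodic f x -> periodic f y -> exists n, iter n f x = y.
Definition mu f w := #|[set i | (f i != i) && (w i != 0)]|.

Lemma closed_iter f P B x n : closedP f P -> B \in P -> x \in B -> iter n f x \in B.
Proof. by move=> Hc PB xB; elim: n => //= n IH; apply: Hc. Qed.

Lemma block_step f w v P B : f v != v -> closedP f P -> B \in P ->
  \prod_(x in B | periodic (fstep f v) x) wstep f w v x =
  \prod_(x in B | periodic f x) w x.
Proof.
move=> nfv Hc PB.
under eq_bigl => x do rewrite per_step //.
case: (boolP ((v \in B) && periodic f v)) => [/andP[vB pv]|H].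
- have [p [pp fpv [n Hn]]] := per_pred pv.
  have pB : p \in B by rewrite -Hn (closed_iter _ Hc).
  have npv : p != v.
    by apply: contra nfv => /eqP E; rewrite -{1}E fpv.
  rewrite [RHS](bigD1 v) /=; last by rewrite vB pv.
  rewrite (bigD1 p) /=; last by rewrite pB pp npv.
  rewrite [X in _ = _ * X](bigD1 p) /=; last by rewrite pB pp npv.
  rewrite /wstep (negbTE npv) fpv eqxx mulrA [w v * _]mulrC -mulrA; rewrite mulrA; congr (_ * _).
  apply: eq_big => [x|x /andP[/andP[xB /andP[px xv]] xp]]; first by rewrite !andbA.
  rewrite (negbTE xv); case: eqP => // fxv.
  by have E := per_inj px pp (etrans fxv (esym fpv)); rewrite E eqxx in xp.
- apply: eq_big => [x|x /andP[xB /andP[px xv]]].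
    case: (boolP (x \in B)) => //= xB; case: (boolP (periodic f x)) => //= px.
    by apply: contraNneq H => <-; rewrite xB.
  rewrite /wstep (negbTE xv); case: eqP => // fxv.
  by case/negP: H; rewrite -fxv (Hc B) // per_f.
Qed.

Lemma base_block f w P B : closedP f P -> unicyc f P -> B \in P -> B != set0 ->
  (forall i, f i != i -> w i = 0) ->
  \prod_(x in B) (1 - (if f x == x then w x else 0)) =
  1 - \prod_(x in B | periodic f x) w x.
Proof.
move=> Hc Hu PB nB Hb.
have [b bB] := set0Pn B nB.
have [k pk] := exists_per f b.
set q := iter k f b in pk.
have qB : q \in B by apply: (closed_iter _ Hc).
have fixper x : f x = x -> periodic f x.
  by move=> fx; apply/perE; exists 0%N.
case: (eqVneq (f q) q) => [fq|nfq].
- rewrite [X in _ = 1 - X](big_pred1 q); last first.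
    move=> x /=; apply/andP/eqP => [[xB px]|->]; last by [].
    have [m Hm] := Hu B q x PB qB xB pk px.
    by rewrite -Hm iter_fix.
  rewrite (bigD1 q) //= fq eqxx big1 ?mulr1 // => x /andP[xB nxq].
  case: ifP => [/eqP fx|]; last by rewrite subr0.
  have [m Hm] := Hu B q x PB qB xB pk (fixper x fx).
  by move: nxq; rewrite -Hm iter_fix // eqxx.
- rewrite [X in _ = 1 - X](bigD1 q) /=; last by rewrite qB pk.
  rewrite (Hb q nfq) mul0r subr0 big1 // => x xB.
  case: ifP => [/eqP fx|]; last by rewrite subr0.
  have [m Hm] := Hu B x q PB xB qB (fixper x fx) pk.
  by move: nfq; rewrite -Hm iter_fix // fx eqxx.
Qed.

Lemma det_main f w P : partition P [set: T] -> closedP f P -> unicyc f P ->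
  \det (1%:M - Mf f w) = \prod_(B in P) (1 - \prod_(x in B | periodic f x) w x).
Proof.
move=> HP; have [n] := ubnP (mu f w); elim: n f w => // n IH f w Hmu Hc Hu.
case: (set_0Vmem [set i | (f i != i) && (w i != 0)]) => [E0|[v]].
  have Hb i : f i != i -> w i = 0.
    move=> ni; apply/eqP; move: (in_set0 i).
    by rewrite -E0 inE ni /= => /negbT; rewrite negbK.
  have -> : 1%:M - Mf f w = diag_mx (\row_i
      (1 - (if f (enum_val i) == enum_val i then w (enum_val i) else 0))).
    apply/matrixP => i j; rewrite !mxE; case: (eqVneq i j) => [<-|nij].
      by rewrite mulr1n eq_sym.
    rewrite mulr0n mulr0n sub0r; case: eqP => [E|_]; last by rewrite oppr0.
    rewrite Hb ?oppr0 // -E; apply: contra nij => /eqP/enum_val_inj ->.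
    by [].
  rewrite det_diag.
  under eq_bigr => i _ do rewrite mxE.
  rewrite -(big_enum_val (fun x => 1 - (if f x == x then w x else 0))).
  case/and3P: HP => /eqP Hcov Htriv H0.
  transitivity (\prod_(B in P) \prod_(x in B) (1 - (if f x == x then w x else 0))).
    rewrite -(big_trivIset _ Htriv) Hcov.
    symmetry; apply: eq_bigl => x; by rewrite inE.
  apply: eq_bigr => B PB; apply: (@base_block f w P B Hc Hu PB) => //.
  by apply: contraNneq H0 => E; rewrite -E.
rewrite inE => /andP[nfv nwv].
rewrite (det_step w nfv) IH //.
- by apply: eq_bigr => B PB; rewrite (block_step w nfv Hc PB).
- move: Hmu; rewrite /mu (cardsD1 v) inE nfv nwv /= add1n ltnS.
  apply: leq_trans; rewrite ltnS; apply: subset_leq_card.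
  apply/subsetP => i; rewrite !inE /fstep /wstep.
  case: (eqVneq i v) => [->|niv] /=; first by rewrite eqxx andbF.
  case: ifP => [/eqP fiv|_] //.
  case/andP=> _ nw; rewrite andbC; apply/andP; split.
    by apply: contraNneq nw => ->; rewrite mul0r.
  by rewrite fiv eq_sym.
- move=> B x PB xB; rewrite /fstep; case: ifP => [/eqP E|_]; last exact: Hc.
  by rewrite -E; apply: (Hc B) => //; apply: (Hc B).
- move=> B x y PB xB yB; rewrite !per_step // => /andP[px nxv] /andP[py nyv].
  have [k Hk] := Hu B x y PB xB yB px py.
  have [k' Hk'] := fstep_iter nfv k x.
  by exists k'; move: Hk'; rewrite Hk (negbTE nxv) (negbTE nyv).
Qed.
End Main.
Section Mon.
Variables V E : finType.
Lemma monM (x y : Hamb V E) : mon x * mon y = mon (x + y).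
Proof. by rewrite /mon; have := gmulUU 1 1 x y; rewrite mulr1. Qed.
Lemma mon0 : mon (0 : Hamb V E) = 1.
Proof. by []. Qed.
End Mon.
Section Comps.
Variables (V : finType) (f : V -> V).
Let e := vrel f.

Lemma vrel_sym : symmetric e.
Proof. by move=> x y; rewrite /e /vrel orbC. Qed.

Lemma csym x y : connect e x y = connect e y x.
Proof. exact: (sym_connect_sym vrel_sym). Qed.

Lemma vcomps_part : partition (vcomps f) [set: V].
Proof.
have -> : vcomps f = equivalence_partition (connect e) [set: V].
  rewrite /vcomps /equivalence_partition.
  apply/setP => B; apply/imsetP/imsetP => [[v _ ->]|[v _ ->]]; exists v => //;
    by apply/setP => y; rewrite !inE.
apply: equivalence_partitionP => x y z _ _ _; split; first exact: connect0.
move=> cxy; apply/idP/idP => H.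
  by apply: connect_trans H; rewrite csym.
exact: connect_trans cxy H.
Qed.

Lemma vcomps_closed : closedP f (vcomps f).
Proof.
move=> B x /imsetP[v _ ->]; rewrite !inE => cvx.
by apply: connect_trans cvx (connect1 _); rewrite /e /vrel eqxx.
Qed.

Lemma path_meet p x : path e x p ->
  exists m n, iter m f x = iter n f (last x p).
Proof.
elim: p x => [|y p IH] x /=; first by move=> _; exists 0%N, 0%N.
case/andP => /orP[/eqP fx|/eqP fy] /IH[m [n H]].
  by exists m.+1, n; rewrite iterSr fx.
by exists m, n.+1; rewrite -fy iterfC H -iterS.
Qed.

Lemma vcomps_unicyc : unicyc f (vcomps f).
Proof.
move=> B x y /imsetP[v _ ->]; rewrite !inE => cvx cvy px py.
have : connect e x y by apply: connect_trans cvy; rewrite csym.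
case/connectP => p pth yE.
by apply: per_reach => //; rewrite yE; apply: path_meet.
Qed.

End Comps.
Section Final.
Variables (V E : finType) (src tgt : E -> V) (f : V -> V).

Lemma sum_pred_id C v0 : C \in vcomps f ->
  \sum_(x in C | periodic f x) ((x == v0)%:Z) = ((v0 \in C) && periodic f v0)%:Z.
Proof.
move=> HC; case: (boolP ((v0 \in C) && periodic f v0)) => [H|H].
  rewrite (bigD1 v0) //= eqxx big1 ?addr0 // => x /andP[_ /negbTE ->]; by [].
rewrite big1 // => x /andP[xC px]; case: eqP => // E0.
by case/negP: H; rewrite -E0 xC.
Qed.

Lemma sum_pred_f C v0 : C \in vcomps f ->
  \sum_(x in C | periodic f x) ((f x == v0)%:Z) = ((v0 \in C) && periodic f v0)%:Z.
Proof.
move=> HC; case: (boolP ((v0 \in C) && periodic f v0)) => [/andP[vC pv]|H].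
  have [p [pp fpv [n Hn]]] := per_pred pv.
  have pC : p \in C by rewrite -Hn (closed_iter _ (@vcomps_closed _ f)).
  rewrite (bigD1 p) /=; last by rewrite pC pp.
  rewrite fpv eqxx big1 ?addr0 // => x /andP[/andP[xC px] xp].
  case: eqP => // fx; case/negP: xp; apply/eqP.
  exact: per_inj px pp (etrans fx (esym fpv)).
rewrite big1 // => x /andP[xC px]; case: eqP => // E0.
case/negP: H; rewrite -E0 per_f // andbT.
exact: (vcomps_closed HC).
Qed.

Lemma cyc_eval C s : cyc_chain E f C s = \sum_(x in C | periodic f x) ((s == inr x)%:Z).
Proof. by rewrite /cyc_chain sum_ffunE; apply: eq_bigr => x _; rewrite ffunE. Qed.

Lemma sum_inr (M : zmodType) (C : {set V}) (F : cell1 V E -> M) :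
  \sum_(s : cell1 V E) \sum_(x in C | periodic f x) F s *~ ((s == inr x)%:Z) =
  \sum_(x in C | periodic f x) F (inr x).
Proof.
rewrite exchange_big /=; apply: eq_bigr => x _.
rewrite (bigD1 (inr x)) //= eqxx mulr1z big1 ?addr0 // => s /negbTE ->.
by rewrite mulr0z.
Qed.

Lemma sum_inrZ (C : {set V}) (F : cell1 V E -> int) :
  \sum_(s : cell1 V E) \sum_(x in C | periodic f x) ((s == inr x)%:Z * F s) =
  \sum_(x in C | periodic f x) F (inr x).
Proof.
rewrite exchange_big /=; apply: eq_bigr => x _.
rewrite (bigD1 (inr x)) //= eqxx mul1r big1 ?addr0 // => s /negbTE ->.
by rewrite mul0r.
Qed.

Lemma sum_theta (M : zmodType) (C : {set V}) (F : cell1 V E -> M) :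
  \sum_s F s *~ cyc_chain E f C s = \sum_(x in C | periodic f x) F (inr x).
Proof. under eq_bigr => s _ do rewrite cyc_eval mulrz_sumr. exact: sum_inr. Qed.

Lemma cyc_is_cycle C : C \in vcomps f -> is_cycle src tgt f (cyc_chain E f C).
Proof.
move=> HC v0; rewrite /bd1.
under eq_bigr => s _ do rewrite cyc_eval mulr_suml.
rewrite sum_inrZ /= sumrB sum_pred_id // sum_pred_f //.
by rewrite subrr.
Qed.

End Final.

Section Gen.
Variables V E : finType.
Lemma monN (x : Hamb V E) : mon x * mon (- x) = 1.
Proof. by rewrite monM subrr. Qed.

Lemma mon3 (xz xf xi ti xj : Hamb V E) : xz + xf = xi + ti + xj ->
  mon xz * mon xf = mon xi * mon ti * mon xj.
Proof.
move=> e.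
exact: (etrans (monM xz xf) (etrans (f_equal (@mon V E) e)
  (etrans (esym (monM (xi + ti) xj)) (f_equal (fun t => t * mon xj) (esym (monM xi ti)))))).
Qed.

Lemma mon_sum (I : finType) (P : pred I) (F : I -> Hamb V E) :
  mon (\sum_(i | P i) F i) = \prod_(i | P i) mon (F i).
Proof.
apply: (big_morph (@mon V E)); last exact: mon0.
by move=> x y; rewrite monM.
Qed.

Lemma zeq (M : zmodType) (z0 a0 t0 b0 : M) : - z0 + (a0 + z0 + t0 - b0) = a0 + t0 + - b0.
Proof. by rewrite [a0 + z0]addrC -!addrA addKr. Qed.
End Gen.

Lemma ent0 (R : comNzRingType) (b c : bool) (mi mj mz mf wi : R) :
  mz * mf = mi * wi * mj -> (b -> mi * mj = 1) ->
  b%:R - mz * (if c then mf else 0) = mi * (b%:R - (if c then wi else 0)) * mj.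
Proof.
move=> e1 e2; rewrite mulrBr mulrBl; congr (_ - _).
  case: b e2 => [e2|_]; first by rewrite mulr1n mulr1 e2.
  by rewrite mulr0n mulr0 mul0r.
by case: c; rewrite ?mulr0 ?mul0r.
Qed.

Lemma finish V E (L R : ZH V E) : L = R -> L = (-1) ^+ false * mon 0 * R.
Proof. by move=> ->; rewrite expr0 mul1r mon0 mul1r. Qed.

Lemma det_conj (R : comNzRingType) n (d d' : 'rV[R]_n) (X : 'M[R]_n) :
  (forall i, d 0 i * d' 0 i = 1) -> \det (diag_mx d *m X *m diag_mx d') = \det X.
Proof.
move=> H; rewrite !det_mulmx !det_diag mulrAC -big_split /= big1 ?mul1r //.
Qed.

Lemma inH0 (V E : finType) (src tgt : E -> V) (fV : V -> V) (fE : E -> seq (oedge E)) :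
  inH src tgt fV fE 0.
Proof.
exists 0; split.
  move=> v; rewrite /bd1 big1 // => s _.
  by rewrite ffunE mul0r.
rewrite /hcls; have -> : chainQ (0 : chain V E) = 0.
  by apply/rowP => i; rewrite !mxE ffunE.
by rewrite mul0mx.
Qed.

Unset Implicit Arguments.
Theorem lemma4p1
  (V E : finType) (src tgt : E -> V)
  (HG : graph_connected src tgt)
  (fV : V -> V) (fE : E -> seq (oedge E))
  (Hf : is_graph_map src tgt fV fE)
  (theta : cell1 V E -> Hamb V E)
  (Htheta : cover_cocycle src tgt fV fE theta)
  (a : V -> Hamb V E)
  (Ha : lifts_ok src tgt fV fE theta a)
  (ftilde : V -> Hamb V E -> Hamb V E)
  (Hft : lift_ok src tgt fV fE theta a ftilde)
  (z : Hamb V E)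
  (Hz : z_ok src tgt fV fE theta a ftilde z) :
  doteq src tgt fV fE
    (\det (1%:M - mon (- z) *: Pt fV a ftilde))
    (\prod_(C in vcomps fV) (1 - mon (hcls src tgt fE (cyc_chain E fV C)))).
Proof.
case: Htheta => Hth1 Hth2; case: Ha => Ha1 Ha2; case: Hz => Hz1 Hz2.
have fteq v : ftilde v (a v) = a v + z + theta (inr v).
  by apply: Hz2; exists v; apply: Ha2.
pose W := fun v => mon (theta (inr v)).
have Hdet : \det (1%:M - mon (- z) *: Pt fV a ftilde) = \det (1%:M - Mf fV W).
  pose D : 'M[ZH V E]_#|{: V}| := diag_mx (\row_i mon (a (enum_val i))).
  pose D' : 'M[ZH V E]_#|{: V}| := diag_mx (\row_i mon (- a (enum_val i))).
  have -> : 1%:M - mon (- z) *: Pt fV a ftilde = D *m (1%:M - Mf fV W) *m D'.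
    apply/matrixP => i j; rewrite mul_mx_diag /D mul_diag_mx [in RHS]mxE [in RHS]mxE !mxE.
    apply: ent0; first by apply: mon3; rewrite fteq zeq.
    by move/eqP => <-; apply: monN.
  by rewrite det_conj // => i; rewrite !mxE monN.
rewrite Hdet (det_main W (@vcomps_part _ fV) (@vcomps_closed _ fV) (@vcomps_unicyc _ fV)).
exists false, 0; split.
  exact: inH0.
apply: finish; apply: eq_bigr => C HC; apply: (congr1 (fun t => 1 - t)).
rewrite -(Hth2 _ (cyc_is_cycle src tgt HC)).
rewrite sum_theta.
symmetry; exact: mon_sum.
Qed.
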